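(* Let $\Gamma=(\rho_0,\dots,\rho_{n-1})$ be a context with every $\rho_k\in\mathrm{Type}^+\cup\mathrm{Type}^-$, let $\Gamma\vdash r:\rho$ be a typed term, $C=(i_0,\dots,i_{n-1})$ with $i_k\in I_{\rho_k}$, and $i\le i'$ in $I_\rho$ such that both state judgements $C\vdash r:i$ and $C\vdash r:i'$ are derivable. Then $\llbracket r\rrbracket^{i'}_{\vec a:C}\triangleright\llbracket r\rrbracket^{i}_{\vec a:C}$ for every $\vec a\in\llbracket\Gamma\rrbracket_C$.
   Context: Systems and factor systems: for a non-empty directed preordered set $I$, a system consists of pairwise disjoint sets $M_i$ ($i\in I$) and relations $\triangleright\subseteq M_{i'}\times M_i$ ($i\le i'$), reflexive for $i=i'$; $a_i\approx b_j$ iff some $c\in M_{i'}$, $i'\ge i,j$, has $c\triangleright a_i,c\triangleright b_j$; prefactor system: $a_{i'}\approx a_i\iff a_{i'}\triangleright a_i$. A factor system is a prefactor system with $\approx$-preserving $emb_{i,i'}:M_i\to M_{i'}$, $proj_{i',i}:M_{i'}\to M_i$ with $emb_{i,i}(a)\approx a$, $proj_{i,i}(a)\approx a$, $emb_{i',i''}\circ emb_{i,i'}(a)\approx emb_{i,i''}(a)$, $proj_{i',i}\circ proj_{i'',i'}(a)\approx proj_{i'',i}(a)$, $proj_{i',i}(emb_{i,i'}(a))\approx a$, and $a_{i'}\triangleright a_i\Rightarrow emb_{i',i''}(a_{i'})\triangleright a_i$, $a_{i''}\triangleright a_i\Rightarrow proj_{i'',i'}(a_{i''})\triangleright a_i$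 ($i\le i'\le i''$); it is direct iff $a_{i'}\triangleright a_i\iff a_{i'}\approx emb_{i,i'}(a_i)$. Filters: for each such $I$ a family $\mathcal F(I)$ of cofinal subsets, closed under supersets and finite intersections, containing all non-empty up-sets; standing Condition (D): $H\in\mathcal F(I\times J)$, $I'\in\mathcal F(I)$ imply $\{j\mid\exists i\in I',(i,j)\in H\}\in\mathcal F(J)$. A target for $M_I$: a set $M$ with relation $a\triangleright a_i$ with $\{i\mid\exists a_i,a\triangleright a_i\}\in\mathcal F(I)$ and $a\triangleright a_{i'},a\triangleright a_i\Rightarrow a_{i'}\triangleright a_i$; a limit is a target $M$ such that every target $N$ admits a unique $\Phi:N\to M$ with $b\triangleright a_i\Rightarrow\Phi(b)\triangleright a_i$. Function space $[M_I\to N_J]$: indices $i\to j\in I\times J$, states = $\approx$-preserving functions $M_i\to N_j$, $f'\triangleright f$ iff $a_{i'}\triangleright a_i\Rightarrow f'(a_{i'})\triangleright f(a_i)$, embeddings $f\mapsto emb_{j,j'}\circ f\circ proj_{i',i}$, projections $f'\mapsto proj_{j',j}\circ f'\circ emb_{i,i'}$. For targets: $[M\to_{\mathcal F}N]=\{f:M\to N\mid I_f\in\mathcal F(I\times J)\}$, $f\triangleright f_{i\to j}$ iff $a\triangleright a_i\Rightarrow f(a)\triangleright f_{i\to j}(a_i)$, $I_f=\{i\to j\mid\exists f_{i\to j},f\triangleright f_{i\to j}\}$. Types $\rho::=\iota\mid\rho\to\rho$ over base types including $\mathsf{prop}$; $\mathrm{Type}^+\ni\rho^+::=\iota\mid\rho^-\to\rho^+$,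 $\mathrm{Type}^-\ni\rho^-::=\mathsf{prop}\mid\rho^+\to\rho^-$. Index sets: non-empty directed $I_\rho$, $I_{\mathsf{prop}}=\{\mathsf{prop}\}$, $I_{\rho\to\sigma}=I_\rho\times I_\sigma$ (elements written $i\to j$). Interpretation of types: each $\rho$ gets a factor system $(\llbracket\rho\rrbracket_i)_{i\in I_\rho}$ and a limit $\llbracket\rho\rrbracket$; base types get direct factor systems; $\mathsf{prop}$ gets the one-index system with state $\{true,false\}$ and limit $\{true,false\}$, all relations being equality; $\rho\to\sigma$ gets the function space $[(\llbracket\rho\rrbracket_i)\to(\llbracket\sigma\rrbracket_j)]$ with limit $[\llbracket\rho\rrbracket\to_{\mathcal F}\llbracket\sigma\rrbracket]$. For $\Gamma=(\rho_0,\dots,\rho_{n-1})$ and $C=(i_0,\dots,i_{n-1})$: $\llbracket\Gamma\rrbracket_C=\prod_k\llbracket\rho_k\rrbracket_{i_k}$. Terms (variables $x_0,x_1,\dots$): $r::=x_k\mid rr\mid\lambda x_k^\rho r$. Typing: $\Gamma\vdash x_k:\rho_k$ ($k<n$); from $\Gamma\vdash r:\rho\to\sigma$, $\Gamma\vdash s:\rho$ infer $\Gamma\vdash rs:\sigma$; from $\Gamma.\rho\vdash r:\sigma$ (context extended by $\rho$ as $x_n$) infer $\Gamma\vdash\lambda x_n^\rho r:\rho\to\sigma$. State judgements: $C\vdash x_k:j$ if $\rho_k\in\mathrm{Type}^+$ and $j\ge i_k$, or if $\rho_k\in\mathrm{Type}^-$ and $j\le i_k$; from $C\vdash r:i\to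 j$ and $C\vdash s:i$ infer $C\vdash rs:j$; from $C.i\vdash r:j$ infer $C\vdash\lambda x_n^\rho r:i\to j$. State values, defined along the derivation of $C\vdash r:i$ for $\vec a\in\llbracket\Gamma\rrbracket_C$: $\llbracket x_k\rrbracket^j_{\vec a:C}=emb_{i_k,j}(a_k)$ if $\rho_k\in\mathrm{Type}^+$, $=proj_{i_k,j}(a_k)$ if $\rho_k\in\mathrm{Type}^-$; $\llbracket rs\rrbracket^j_{\vec a:C}=\llbracket r\rrbracket^{i\to j}_{\vec a:C}(\llbracket s\rrbracket^i_{\vec a:C})$; $\llbracket\lambda x_n^\rho r\rrbracket^{i\to j}_{\vec a:C}(b)=\llbracket r\rrbracket^j_{\vec a.b:C.i}$ for $b\in\llbracket\rho\rrbracket_i$. *)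

(* Defs.v *)
From Stdlib Require Import List.
Import ListNotations.

Set Implicit Arguments.
Unset Strict Implicit.

(* Raw data of a system: index preorder, states, relation |>, emb, proj.
   [svalid i a] singles out the actual states inside the carrier [sst i]
   (for base types and prop every element is a state; for function spaces
   the states are the ~-preserving functions, see [funSys]).
   [srel i i' a' a] means  a'_{i'} |> a_i  (a' in M_{i'}, a in M_i).
   [semb H] = emb_{i,i'} and [sproj H] = proj_{i',i} for H : i <= i'.      *)
Record RawSys := {
  sidx   : Type;
  sle    : sidx -> sidx -> Prop;
  sst    : sidx -> Type;
  svalid : forall i, sst i -> Prop;
  srel   : forall i i', sst i' -> sst i -> Prop;
  semb   : forall i i', sle i i' -> sst i -> sst i';
  sproj  : forall i i', sle i i' -> sst i' -> sst i
}.

Arguments sle {S} i j : rename.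
Arguments sst {S} i : rename.
Arguments svalid {S} {i} a : rename.
Arguments srel {S} {i i'} a' a : rename.
Arguments semb {S} {i i'} H a : rename.
Arguments sproj {S} {i i'} H a : rename.

Definition approx (S : RawSys) (i j : sidx S) (a : sst i) (b : sst j) : Prop :=
  exists (k : sidx S) (c : sst k),
    svalid c /\ sle i k /\ sle j k /\ srel c a /\ srel c b.

Record BaseSys := {
  bidx  : Type;
  ble   : bidx -> bidx -> Prop;
  bst   : bidx -> Type;
  brel  : forall i i', bst i' -> bst i -> Prop;
  bemb  : forall i i', ble i i' -> bst i -> bst i';
  bproj : forall i i', ble i i' -> bst i' -> bst i
}.

Definition baseRaw (B : BaseSys) : RawSys :=
  {| sidx := bidx B; sle := @ble B; sst := @bst B;
     svalid := fun _ _ => True; srel := @brel B;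
     semb := @bemb B; sproj := @bproj B |}.

Definition directed_preorder (S : RawSys) : Prop :=
  inhabited (sidx S) /\
  (forall i : sidx S, sle i i) /\
  (forall i j k : sidx S, sle i j -> sle j k -> sle i k) /\
  (forall i j : sidx S, exists k, sle i k /\ sle j k).

Definition is_system (S : RawSys) : Prop :=
  directed_preorder S /\
  (forall (i i' : sidx S) (a' : sst i') (a : sst i), srel a' a -> sle i i') /\
  (forall (i : sidx S) (a : sst i), svalid a -> srel a a).

Definition is_prefactor_system (S : RawSys) : Prop :=
  is_system S /\
  forall (i i' : sidx S) (a' : sst i') (a : sst i), svalid a' -> svalid a -> sle i i' ->
    (approx a' a <-> srel a' a).

Definition is_factor_system (S : RawSys) : Prop :=
  is_prefactor_system S /\
  (forall (i i' : sidx S) (H : sle i i') (a : sst i), svalid a -> svalid (semb H a)) /\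
  (forall (i i' : sidx S) (H : sle i i') (a : sst i'), svalid a -> svalid (sproj H a)) /\
  (forall (i i' : sidx S) (H : sle i i') (a b : sst i), svalid a -> svalid b ->
      approx a b -> approx (semb H a) (semb H b)) /\
  (forall (i i' : sidx S) (H : sle i i') (a b : sst i'), svalid a -> svalid b ->
      approx a b -> approx (sproj H a) (sproj H b)) /\
  (forall (i : sidx S) (H : sle i i) (a : sst i), svalid a -> approx (semb H a) a) /\
  (forall (i : sidx S) (H : sle i i) (a : sst i), svalid a -> approx (sproj H a) a) /\
  (forall (i i' i'' : sidx S) (H1 : sle i i') (H2 : sle i' i'') (H3 : sle i i'') (a : sst i),
      svalid a -> approx (semb H2 (semb H1 a)) (semb H3 a)) /\
  (forall (i i' i'' : sidx S) (H1 : sle i i') (H2 : sle i' i'') (H3 : sle i i'') (a : sst i''),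
      svalid a -> approx (sproj H1 (sproj H2 a)) (sproj H3 a)) /\
  (forall (i i' : sidx S) (H : sle i i') (a : sst i),
      svalid a -> approx (sproj H (semb H a)) a) /\
  (forall (i i' i'' : sidx S) (H1 : sle i i') (H2 : sle i' i'') (a' : sst i') (a : sst i),
      svalid a' -> svalid a -> srel a' a -> srel (semb H2 a') a) /\
  (forall (i i' i'' : sidx S) (H1 : sle i i') (H2 : sle i' i'') (a'' : sst i'') (a : sst i),
      svalid a'' -> svalid a -> srel a'' a -> srel (sproj H2 a'') a).

Definition is_direct_factor_system (S : RawSys) : Prop :=
  is_factor_system S /\
  forall (i i' : sidx S) (H : sle i i') (a' : sst i') (a : sst i), svalid a' -> svalid a ->
    (srel a' a <-> approx a' (semb H a)).

Definition propSys : RawSys :=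
  {| sidx := unit; sle := fun _ _ => True; sst := fun _ => bool;
     svalid := fun _ _ => True; srel := fun _ _ a' a => a' = a;
     semb := fun _ _ _ a => a; sproj := fun _ _ _ a => a |}.

Definition funSys (S T : RawSys) : RawSys :=
  {| sidx := (sidx S * sidx T)%type;
     sle := fun p p' => sle (fst p) (fst p') /\ sle (snd p) (snd p');
     sst := fun p => sst (fst p) -> sst (snd p);
     svalid := fun p f =>
       (forall a : sst (fst p), svalid a -> svalid (f a)) /\
       (forall a b : sst (fst p), svalid a -> svalid b ->
          approx a b -> approx (f a) (f b));
     srel := fun p p' f' f =>
       (sle (fst p) (fst p') /\ sle (snd p) (snd p')) /\
       (forall (a' : sst (fst p')) (a : sst (fst p)), svalid a' -> svalid a ->
          srel a' a -> srel (f' a') (f a));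
     semb := fun p p' H f => fun a => semb (proj2 H) (f (sproj (proj1 H) a));
     sproj := fun p p' H f' => fun a => sproj (proj2 H) (f' (semb (proj1 H) a)) |}.

Section Types.
Variable B : Type.
Variable BI : B -> BaseSys.

Inductive ty : Type :=
| TBase : B -> ty
| TProp : ty
| TArr : ty -> ty -> ty.

Fixpoint posT (t : ty) : bool :=
  match t with
  | TBase _ => true
  | TProp => true
  | TArr r s => negT r && posT s
  end
with negT (t : ty) : bool :=
  match t with
  | TBase _ => false
  | TProp => true
  | TArr r s => posT r && negT s
  end.

Fixpoint interp (t : ty) : RawSys :=
  match t with
  | TBase b => baseRaw (BI b)
  | TProp => propSys
  | TArr r s => funSys (interp r) (interp s)
  end.

Inductive term : Type :=
| Var : nat -> term
| App : term -> term -> term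
| Lam : nat -> ty -> term -> term.

Inductive typed : list ty -> term -> ty -> Prop :=
| typed_var : forall G k, k < length G -> typed G (Var k) (nth k G TProp)
| typed_app : forall G r s rho sigma,
    typed G r (TArr rho sigma) -> typed G s rho -> typed G (App r s) sigma
| typed_lam : forall G r rho sigma,
    typed (G ++ [rho]) r sigma -> typed G (Lam (length G) rho r) (TArr rho sigma).

(* An index context C = (i_0,...,i_{n-1}) together with the types rho_k:
   a list of pairs (rho_k, i_k) with i_k in I_{rho_k}. *)
Definition entry : Type := { t : ty & sidx (interp t) }.
Definition dentry : entry := existT _ TProp tt.

(* State judgements C |- r : i (in Type, so that values are computed along
   derivations). *)
Unset Implicit Arguments.
Inductive stj : list entry -> term -> forall t : ty, sidx (interp t) -> Type :=
| stj_var_pos : forall C k (j : sidx (interp (projT1 (nth k C dentry)))),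
    k < length C -> posT (projT1 (nth k C dentry)) = true ->
    sle (projT2 (nth k C dentry)) j ->
    stj C (Var k) (projT1 (nth k C dentry)) j
| stj_var_neg : forall C k (j : sidx (interp (projT1 (nth k C dentry)))),
    k < length C -> negT (projT1 (nth k C dentry)) = true ->
    sle j (projT2 (nth k C dentry)) ->
    stj C (Var k) (projT1 (nth k C dentry)) j
| stj_app : forall C r s rho sigma (i : sidx (interp rho)) (j : sidx (interp sigma)),
    stj C r (TArr rho sigma) (i, j) -> stj C s rho i -> stj C (App r s) sigma j
| stj_lam : forall C n rho sigma r (i : sidx (interp rho)) (j : sidx (interp sigma)),
    n = length C ->
    stj (C ++ [existT _ rho i]) r sigma j ->
    stj C (Lam n rho r) (TArr rho sigma) (i, j).
Set Implicit Arguments.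
Arguments stj_var_pos {C k j}.
Arguments stj_var_neg {C k j}.
Arguments stj_app {C r s rho sigma i j}.
Arguments stj_lam {C n rho sigma r i j}.

(* Tuples a in [[Gamma]]_C = prod_k [[rho_k]]_{i_k}. *)
Inductive hlist (F : entry -> Type) : list entry -> Type :=
| HNil : hlist F nil
| HCons : forall e l, F e -> hlist F l -> hlist F (e :: l).

Definition estate (e : entry) : Type := sst (projT2 e).

Fixpoint hsnoc (l : list entry) (h : hlist estate l) (e : entry) (x : estate e)
  : hlist estate (l ++ [e]) :=
  match h in hlist _ l0 return hlist estate (l0 ++ [e]) with
  | HNil _ => HCons x (HNil _)
  | HCons y h' => HCons y (hsnoc h' x)
  end.

Fixpoint hnth (l : list entry) (h : hlist estate l) (k : nat) {struct h}
  : estate (nth k l dentry) :=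
  match h in hlist _ l0 return estate (nth k l0 dentry) with
  | HNil _ => match k return estate (nth k nil dentry) with
              | 0 => true | S _ => true end
  | @HCons _ e l' y h' =>
      match k return estate (nth k (e :: l') dentry) with
      | 0 => y
      | S m => hnth h' m
      end
  end.

Fixpoint hvalid (l : list entry) (h : hlist estate l) : Prop :=
  match h with
  | HNil _ => True
  | HCons x h' => svalid x /\ hvalid h'
  end.

Fixpoint sval (C : list entry) (r : term) (t : ty) (i : sidx (interp t))
  (d : stj C r t i) (a : hlist estate C) {struct d} : sst i :=
  match d in stj C0 r0 t0 i0 return hlist estate C0 -> sst i0 with
  | stj_var_pos _ _ H => fun a => semb H (hnth a _)
  | stj_var_neg _ _ H => fun a => sproj H (hnth a _)
  | stj_app d1 d2 => fun a => (sval d1 a) (sval d2 a)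
  | @stj_lam C0 _ rho _ _ i0 _ _ d1 =>
      fun a => fun b : sst i0 => sval d1 (@hsnoc C0 a (existT _ rho i0) b)
  end a.

End Types.
Arguments stj {B BI} _ _ _ _.

(* Main.v *)
Require Import Defs.
From Stdlib Require Import List Program.Equality.

Set Implicit Arguments.
Record Good (S : RawSys) : Prop := {
  g_refl : forall i : sidx S, sle i i;
  g_trans : forall i j k : sidx S, sle i j -> sle j k -> sle i k;
  g_le : forall i i' (a' : sst (S:=S) i') (a : sst i), srel a' a -> sle i i';
  g_rrefl : forall i (a : sst (S:=S) i), svalid a -> srel a a;
  g_pre : forall i (a b : sst (S:=S) i), svalid a -> svalid b -> approx a b -> srel a b;
  g_vemb : forall i i' (H : sle (S:=S) i i') (a : sst i), svalid a -> svalid (semb H a);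
  g_vproj : forall i i' (H : sle (S:=S) i i') (a : sst i'), svalid a -> svalid (sproj H a);
  g_memb : forall i i' (H : sle (S:=S) i i') (a b : sst i), svalid a -> svalid b ->
     srel a b -> srel (semb H a) (semb H b);
  g_mproj : forall i i' (H : sle (S:=S) i i') (a b : sst i'), svalid a -> svalid b ->
     srel a b -> srel (sproj H a) (sproj H b);
  g_aemb : forall i i' i'' (H : sle (S:=S) i' i'') (a' : sst i') (a : sst i),
     svalid a' -> svalid a -> srel a' a -> srel (semb H a') a;
  g_aproj : forall i i' i'' (H : sle (S:=S) i' i'') (a'' : sst i'') (a : sst i),
     svalid a'' -> svalid a -> sle i i' -> srel a'' a -> srel (sproj H a'') a
}.

Lemma rel_approx (S : RawSys) (G : Good S) i i' (a' : sst (S:=S) i') (a : sst i) :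
  svalid a' -> srel a' a -> approx a' a.
Proof.
  intros Va R. exists i', a'. repeat split; auto.
  - apply (g_refl G).
  - eapply (g_le G); eauto.
  - apply (g_rrefl G); auto.
Qed.

Lemma good_fun S T : Good S -> Good T -> Good (funSys S T).
Proof.
  intros GS GT. constructor.
  - intros [i j]; simpl; split; apply g_refl; auto.
  - intros [i1 j1] [i2 j2] [i3 j3]; simpl; intros [] []; split; eapply g_trans; eauto.
  - intros p p' f' f [H _]; exact H.
  - intros [i j] f [Vf Pf]; simpl in *. split; [split; apply g_refl; auto|].
    intros a' a Va' Va R. apply (g_pre GT); auto.
    apply Pf; auto. apply (rel_approx GS); auto.
  - intros [i j] f g [Vf Pf] [Vg Pg] [[k l] [c [[Vc Pc] [[Hik Hjl] [_ [[_ Rcf] [_ Rcg]]]]]]].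
    simpl in *. split; [split; apply g_refl; auto|].
    intros b' b Vb' Vb R. apply (g_pre GT); auto.
    exists l, (c (semb Hik b')). repeat split; auto.
    + apply Vc. apply (g_vemb GS); auto.
    + apply Rcf; auto. apply (g_vemb GS); auto. apply (g_aemb GS); auto. apply (g_rrefl GS); auto.
    + apply Rcg; auto. apply (g_vemb GS); auto. apply (g_aemb GS); auto.
  - intros [i j] [i' j'] [H1 H2] f [Vf Pf]; simpl in *. split.
    + intros x Vx. apply (g_vemb GT). apply Vf. apply (g_vproj GS); auto.
    + intros x y Vx Vy Axy. apply (rel_approx GT).
      * apply (g_vemb GT). apply Vf. apply (g_vproj GS); auto.
      * apply (g_memb GT); try (apply Vf; apply (g_vproj GS); auto).
        apply (g_pre GT); try (apply Vf; apply (g_vproj GS); auto).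
        apply Pf; try (apply (g_vproj GS); auto).
        apply (rel_approx GS). apply (g_vproj GS); auto.
        apply (g_mproj GS); auto. apply (g_pre GS); auto.
  - intros [i j] [i' j'] [H1 H2] f [Vf Pf]; simpl in *. split.
    + intros x Vx. apply (g_vproj GT). apply Vf. apply (g_vemb GS); auto.
    + intros x y Vx Vy Axy. apply (rel_approx GT).
      * apply (g_vproj GT). apply Vf. apply (g_vemb GS); auto.
      * apply (g_mproj GT); try (apply Vf; apply (g_vemb GS); auto).
        apply (g_pre GT); try (apply Vf; apply (g_vemb GS); auto).
        apply Pf; try (apply (g_vemb GS); auto).
        apply (rel_approx GS). apply (g_vemb GS); auto.
        apply (g_memb GS); auto. apply (g_pre GS); auto.
  - intros [i j] [i' j'] [H1 H2] f g [Vf Pf] [Vg Pg] [_ R]; simpl in *.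
    split; [split; apply g_refl; auto|].
    intros x' x Vx' Vx Rx. apply (g_memb GT); try (apply Vf || apply Vg; apply (g_vproj GS); auto).
    apply R; try (apply (g_vproj GS); auto). apply (g_mproj GS); auto.
  - intros [i j] [i' j'] [H1 H2] f g [Vf Pf] [Vg Pg] [_ R]; simpl in *.
    split; [split; apply g_refl; auto|].
    intros x' x Vx' Vx Rx. apply (g_mproj GT); try (apply Vf || apply Vg; apply (g_vemb GS); auto).
    apply R; try (apply (g_vemb GS); auto). apply (g_memb GS); auto.
  - intros [i j] [i' j'] [i'' j''] [H1 H2] f' f [Vf' Pf'] [Vf Pf] [[L1 L2] R]; simpl in *.
    split; [split; eapply g_trans; eauto|].
    intros x b Vx Vb Rxb. apply (g_aemb GT); auto.
    + apply Vf'. apply (g_vproj GS); auto.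
    + apply R; auto. apply (g_vproj GS); auto.
      apply (g_aproj GS); auto.
  - intros [i j] [i' j'] [i'' j''] [H1 H2] f'' f [Vf' Pf'] [Vf Pf] [L1 L2] [_ R]; simpl in *.
    split; [split; auto|].
    intros x b Vx Vb Rxb. apply (g_aproj GT); auto.
    + apply Vf'. apply (g_vemb GS); auto.
    + apply R; auto. apply (g_vemb GS); auto.
      apply (g_aemb GS); auto.
Qed.
Unset Implicit Arguments.

Lemma good_base X : is_direct_factor_system (baseRaw X) -> Good (baseRaw X).
Proof.
  intros [[[[[_ [Hrefl [Htrans _]]] [Hle Hrr]] Hpre]
          [Vemb [Vproj [Aemb [Aproj [Eid [Pid [Ecomp [Pcomp [PE [AxE AxP]]]]]]]]]]] Hdirect].
  constructor; auto; intros.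
  all: try solve [apply Hpre; auto; first [apply Aemb | apply Aproj]; auto; apply Hpre; auto].
  all: try solve [eapply AxE; eauto].
  all: try solve [eapply AxP; eauto].
  all: try solve [apply (proj1 (Hpre _ _ _ _ ltac:(auto) ltac:(auto) (Hrefl _))); auto].
Qed.

Lemma good_prop : Good propSys.
Proof.
  constructor; simpl; auto.
  intros i a b _ _ [k [c [_ [_ [_ [H1 H2]]]]]]. simpl in *. congruence.
Qed.

Section S.
Variable B : Type.
Variable BI : B -> BaseSys.
Hypothesis HBI : forall b : B, is_direct_factor_system (baseRaw (BI b)).

Lemma good_interp : forall t, Good (interp BI t).
Proof.
  induction t; simpl.
  - apply good_base; auto.
  - apply good_prop.
  - apply good_fun; auto.
Qed.
End S.

Definition EmbMono (S : RawSys) := forall i i' j j' (a' : sst (S:=S) i') (a : sst i)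
  (H : sle i j) (H' : sle i' j'), sle j j' -> svalid a' -> svalid a -> srel a' a ->
  srel (semb H' a') (semb H a).
Definition ProjMono (S : RawSys) := forall I I' j j' (a' : sst (S:=S) I') (a : sst I)
  (H : sle j I) (H' : sle j' I'), sle j j' -> svalid a' -> svalid a -> srel a' a ->
  srel (sproj H' a') (sproj H a).

Lemma approx_sym (S : RawSys) i j (a : sst (S:=S) i) (b : sst j) : approx a b -> approx b a.
Proof. intros [k [c [V [L1 [L2 [R1 R2]]]]]]. exists k, c; repeat split; auto. Qed.

Lemma base_emb_mono X : is_direct_factor_system (baseRaw X) -> EmbMono (baseRaw X).
Proof.
  intros HD. pose proof (good_base _ HD) as G.
  destruct HD as [[[[[_ [Hrefl [Htrans _]]] [Hle Hrr]] Hpre]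
          [Vemb [Vproj [Aemb [Aproj [Eid [Pid [Ecomp [Pcomp [PE [AxE AxP]]]]]]]]]]] Hdirect].
  intros i i' j j' a' a H H' Hjj' Va' Va R.
  pose proof (Htrans _ _ _ H Hjj') as Hij'.
  assert (RX : srel (semb H' a') a) by (eapply AxE; eauto).
  apply (proj1 (Hdirect i j' Hij' _ _ I I)) in RX.
  pose proof (Ecomp i j j' H Hjj' Hij' a I) as EC.
  apply (proj2 (Hdirect j j' Hjj' _ _ I I)).
  exists j', (semb Hij' a). repeat split; auto.
  - apply Hpre; auto. apply approx_sym; auto.
  - apply Hpre; auto. apply approx_sym; auto.
Qed.

Section S.
Variable B : Type.
Variable BI : B -> BaseSys.
Hypothesis HBI : forall b : B, is_direct_factor_system (baseRaw (BI b)).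

Lemma mono : forall t, (posT t = true -> EmbMono (interp BI t)) /\
                       (negT t = true -> ProjMono (interp BI t)).
Proof.
  induction t as [b| |t1 [E1 P1] t2 [E2 P2]]; simpl.
  - split; [intros _; apply base_emb_mono; auto | discriminate].
  - split; intros _; red; simpl; auto.
  - pose proof (good_interp _ _ HBI t1) as G1. pose proof (good_interp _ _ HBI t2) as G2.
    split; intros Hp; apply andb_prop in Hp; destruct Hp as [Hp1 Hp2].
    + intros [i k] [i' k'] [J K] [J' K'] f' f [H1 H2] [H1' H2'] [L1 L2] [Vf' _] [Vf _] [[M1 M2] R].
      simpl in *. split; [split; auto|].
      intros x' x Vx' Vx Rx. apply E2; auto.
      * apply Vf'. apply (g_vproj G1); auto.
      * apply Vf. apply (g_vproj G1); auto.
      * apply R; try (apply (g_vproj G1); auto). apply P1; auto.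
    + intros [I K] [I' K'] [j k] [j' k'] f' f [H1 H2] [H1' H2'] [L1 L2] [Vf' _] [Vf _] [[M1 M2] R].
      simpl in *. split; [split; auto|].
      intros x' x Vx' Vx Rx. apply P2; auto.
      * apply Vf'. apply (g_vemb G1); auto.
      * apply Vf. apply (g_vemb G1); auto.
      * apply R; try (apply (g_vemb G1); auto). apply E1; auto.
Qed.

Lemma both_triv : forall t, posT t = true -> negT t = true ->
  (forall i j : sidx (interp BI t), sle i j) /\
  (forall i i' (a' : sst (S:=interp BI t) i') (a : sst i), svalid a' -> svalid a -> srel a' a ->
     (forall i'' (H : sle i' i''), srel (semb H a') a) /\
     (forall i'' (H : sle i'' i'), srel (sproj H a') a) /\
     (forall i'' (H : sle i i''), srel a' (semb H a)) /\
     (forall i'' (H : sle i'' i), srel a' (sproj H a))).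
Proof.
  induction t as [b| |t1 IH1 t2 IH2]; simpl; try discriminate.
  - intros _ _. split; auto.
  - intros Hp Hn. apply andb_prop in Hp; apply andb_prop in Hn.
    destruct Hp as [Hn1 Hp2]; destruct Hn as [Hp1 Hn2].
    destruct (IH1 Hp1 Hn1) as [T1 R1]. destruct (IH2 Hp2 Hn2) as [T2 R2].
    pose proof (good_interp _ _ HBI t1) as G1. pose proof (good_interp _ _ HBI t2) as G2.
    split; [intros [] []; simpl; auto|].
    intros [i k] [i' k'] f' f [Vf' _] [Vf _] [_ R].
    simpl in *.
    repeat split; auto; intros x' x Vx' Vx Rx; simpl.
    + apply R2; try apply Vf; auto. apply Vf'; apply (g_vproj G1); auto.
      apply R; auto. apply (g_vproj G1); auto. apply R1; auto.
    + apply R2; try apply Vf; auto. apply Vf'; apply (g_vemb G1); auto.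
      apply R; auto. apply (g_vemb G1); auto. apply R1; auto.
    + apply R2; try apply Vf'; auto. apply Vf; apply (g_vproj G1); auto.
      apply R; auto. apply (g_vproj G1); auto. apply R1; auto.
    + apply R2; try apply Vf'; auto. apply Vf; apply (g_vemb G1); auto.
      apply R; auto. apply (g_vemb G1); auto. apply R1; auto.
Qed.
End S.

Lemma srel_trans_same (S : RawSys) (G : Good S) i (a b c : sst (S:=S) i) :
  svalid a -> svalid b -> svalid c -> srel a b -> srel b c -> srel a c.
Proof.
  intros Va Vb Vc R1 R2. apply (g_pre G); auto.
  exists i, b. repeat split; auto; try apply (g_refl G).
  apply (g_pre G); auto. apply approx_sym. apply (rel_approx G); auto.
Qed.

Section S.
Variable B : Type.
Variable BI : B -> BaseSys.
Hypothesis HBI : forall b : B, is_direct_factor_system (baseRaw (BI b)).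

Fixpoint Sim (t : ty B) : forall i i' : sidx (interp BI t), sst i -> sst i' -> Prop :=
  match t with
  | TBase b => fun i i' x y => approx (S:=interp BI (TBase b)) x y
  | TProp _ => fun _ _ x y => x = y
  | TArr r s => fun p p' f g => forall u v, svalid u -> svalid v -> Sim r _ _ u v ->
                                  Sim s _ _ (f u) (g v)
  end.
Arguments Sim t {i i'} _ _.

Lemma Sim_sym : forall t i i' (x : sst (S:=interp BI t) i) (y : sst i'), Sim t x y -> Sim t y x.
Proof.
  induction t; simpl; intros.
  - apply approx_sym; auto.
  - auto.
  - apply IHt2. apply H; auto.
Qed.

Lemma Sim_ord : forall t i i' (x' : sst (S:=interp BI t) i') (x : sst i), sle i i' ->
  svalid x' -> svalid x -> (Sim t x' x <-> srel x' x).
Proof.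
  induction t as [b| |t1 IH1 t2 IH2]; simpl; intros.
  - destruct (HBI b) as [[[_ Hpre] _] _]. apply Hpre; auto.
  - tauto.
  - destruct i as [i j], i' as [i' j'], H as [L1 L2]; simpl in *.
    destruct H0 as [Vx' _], H1 as [Vx _].
    split.
    + intros HS. split; [split; auto|]. intros b' b Vb' Vb R.
      apply IH2; auto. apply HS; auto. apply IH1; auto.
    + intros [_ R] u v Vu Vv HS. apply IH2; auto.
      apply R; auto. apply IH1; auto.
Qed.

Lemma Sim_refl t i (x : sst (S:=interp BI t) i) : svalid x -> Sim t x x.
Proof.
  intros V. apply Sim_ord; auto. apply (g_refl (good_interp _ _ HBI t)).
  apply (g_rrefl (good_interp _ _ HBI t)); auto.
Qed.

Lemma base_emb_sim b i i' (H : sle (S:=baseRaw (BI b)) i i') l (x : sst i) (y : sst l) :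
  approx x y -> approx (semb H x) y.
Proof.
  pose proof (good_base _ (HBI b)) as G.
  destruct (HBI b) as [[[[[_ [Hrefl [Htrans Hdirc]]] [Hle Hrr]] Hpre]
          [Vemb [Vproj [Aemb [Aproj [Eid [Pid [Ecomp [Pcomp [PE [AxE AxP]]]]]]]]]]] Hdirect].
  intros [k [c [Vc [Lik [Llk [Rcx Rcy]]]]]].
  destruct (Hdirc k i') as [K [HkK Hi'K]].
  pose proof (Htrans _ _ _ H Hi'K) as HiK.
  set (c' := semb (S:=baseRaw (BI b)) HkK c).
  assert (R1 : srel c' x) by (eapply AxE; eauto).
  assert (R2 : srel c' y) by (eapply AxE; eauto).
  apply (proj1 (Hdirect _ _ HiK _ _ I I)) in R1.
  pose proof (Ecomp _ _ _ H Hi'K HiK x I) as EC.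
  exists K, c'. split; [exact I|]. split; [exact Hi'K|]. split; [eapply Htrans; eauto|].
  split; [|exact R2].
  apply (proj2 (Hdirect _ _ Hi'K _ _ I I)).
  apply (rel_approx G); auto.
  eapply (srel_trans_same _ G); simpl; auto.
  - apply (g_pre G); simpl; eauto.
  - apply (g_pre G); simpl; auto. apply approx_sym; auto.
Qed.

Lemma Sim_mono : forall t,
  (posT t = true -> forall i i' (H : sle i i') l (x : sst (S:=interp BI t) i) (y : sst l),
     svalid x -> svalid y -> Sim t x y -> Sim t (semb H x) y) /\
  (negT t = true -> forall i i' (H : sle i i') l (x : sst (S:=interp BI t) i') (y : sst l),
     svalid x -> svalid y -> Sim t x y -> Sim t (sproj H x) y).
Proof.
  induction t as [b| |t1 [E1 P1] t2 [E2 P2]]; simpl.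
  - split; [|discriminate]. intros _ i i' H l x y _ _ A. apply base_emb_sim; auto.
  - split; intros; auto.
  - pose proof (good_interp _ _ HBI t1) as G1. pose proof (good_interp _ _ HBI t2) as G2.
    split; intros Hp; apply andb_prop in Hp; destruct Hp as [Hp1 Hp2].
    + intros [i k] [i' k'] [H1 H2] [l m] f g [Vf _] [Vg _] HS u v Vu Vv Huv; simpl in *.
      apply E2; auto. apply Vf; apply (g_vproj G1); auto.
      apply HS; auto. apply (g_vproj G1); auto.
    + intros [i k] [i' k'] [H1 H2] [l m] f g [Vf _] [Vg _] HS u v Vu Vv Huv; simpl in *.
      apply P2; auto. apply Vf; apply (g_vemb G1); auto.
      apply HS; auto. apply (g_vemb G1); auto.
Qed.

End S.

Section S.
Variable B : Type.
Variable BI : B -> BaseSys.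
Hypothesis HBI : forall b : B, is_direct_factor_system (baseRaw (BI b)).

Notation Simx t x y := (Sim B BI t _ _ x y).


Inductive CSim : forall C C' : list (entry BI), hlist (@estate B BI) C -> hlist (@estate B BI) C' -> Prop :=
| CS_nil : CSim nil nil (HNil _) (HNil _)
| CS_cons : forall t (i i' : sidx (interp BI t)) C C' (x : sst i) (x' : sst i')
    (h : hlist (@estate B BI) C) (h' : hlist (@estate B BI) C'),
    svalid x -> svalid x' -> Simx t x x' -> CSim C C' h h' ->
    CSim _ _ (HCons (e:=existT _ t i) x h) (HCons (e:=existT _ t i') x' h').

Arguments CSim {C C'} _ _.


Definition pk (t : ty B) := { i : sidx (interp BI t) & sst i }.
Definition pack t (j : sidx (interp BI t)) (u : sst j) : { t : ty B & pk t } :=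
  existT _ t (existT _ j u).

Inductive Rep (t : ty B) (i : sidx (interp BI t)) (x : sst i) : { t : ty B & pk t } -> Prop :=
| Rep_emb : posT t = true -> forall j (H : sle i j), Rep t i x (pack _ _ (semb H x))
| Rep_proj : negT t = true -> forall j (H : sle j i), Rep t i x (pack _ _ (sproj H x)).
Arguments pack {t j} u.
Arguments Rep {t i} x _.

Lemma CSim_map C C' (a : hlist (@estate B BI) C) (a' : hlist (@estate B BI) C') :
  CSim a a' -> map (@projT1 _ _) C = map (@projT1 _ _) C'.
Proof. induction 1; simpl; congruence. Qed.

Lemma CSim_len C C' (a : hlist (@estate B BI) C) (a' : hlist (@estate B BI) C') :
  CSim a a' -> length C = length C'.
Proof. intros H%CSim_map. apply (f_equal (@length _)) in H. rewrite !length_map in H. exact H. Qed.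

Lemma CSim_refl_l C C' (a : hlist (@estate B BI) C) (a' : hlist (@estate B BI) C') :
  CSim a a' -> CSim a a.
Proof. induction 1; constructor; auto. apply Sim_refl; auto. Qed.

Lemma CSim_refl_r C C' (a : hlist (@estate B BI) C) (a' : hlist (@estate B BI) C') :
  CSim a a' -> CSim a' a'.
Proof. induction 1; constructor; auto. apply Sim_refl; auto. Qed.

Lemma CSim_snoc C C' (a : hlist (@estate B BI) C) (a' : hlist (@estate B BI) C') :
  CSim a a' -> forall t (i i' : sidx (interp BI t)) (x : sst i) (x' : sst i'),
  svalid x -> svalid x' -> Simx t x x' ->
  CSim (hsnoc a (e:=existT _ t i) x) (hsnoc a' (e:=existT _ t i') x').
Proof.
  induction 1; intros; simpl; constructor; auto. constructor.
Qed.

Lemma hvalid_CSim C (a : hlist (@estate B BI) C) : hvalid a -> CSim a a.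
Proof.
  induction a as [|[t i] l x h IH]; simpl; intros.
  - constructor.
  - destruct H. constructor; auto. apply Sim_refl; auto.
Qed.

Lemma VarCore C C' (a : hlist (@estate B BI) C) (a' : hlist (@estate B BI) C') :
  CSim a a' -> forall k, k < length C ->
  exists t (i i' : sidx (interp BI t)) (x : sst i) (x' : sst i'),
    nth k C (dentry BI) = existT _ t i /\ nth k C' (dentry BI) = existT _ t i' /\
    JMeq (hnth a k) x /\ JMeq (hnth a' k) x' /\ svalid x /\ svalid x' /\ Simx t x x'.
Proof.
  induction 1; simpl; intros k Hk.
  - inversion Hk.
  - destruct k as [|k].
    + exists t, i, i', x, x'. repeat split; auto.
    + apply IHCSim. apply PeanoNat.Nat.succ_lt_mono; auto.
Qed.

Lemma var_rep (C : list (entry BI)) k t j (dd : stj C (Var B k) t j) (a : hlist (@estate B BI) C)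
  tt (i : sidx (interp BI tt)) (x : sst i) :
  nth k C (dentry BI) = existT _ tt i -> JMeq (hnth a k) x -> Rep x (pack (sval dd a)).
Proof.
  intros E J.
  dependent destruction dd; simpl.
  - revert e s J. generalize (hnth a k). revert j. rewrite E. simpl.
    intros j y Hp s J. apply JMeq_eq in J. subst. apply Rep_emb; auto.
  - revert e s J. generalize (hnth a k). revert j. rewrite E. simpl.
    intros j y Hp s J. apply JMeq_eq in J. subst. apply Rep_proj; auto.
Qed.

Lemma var_lt (C : list (entry BI)) k t j (dd : stj C (Var B k) t j) : k < length C.
Proof. dependent destruction dd; auto. Qed.

Lemma Rep_valid t (i : sidx (interp BI t)) (x : sst i) p :
  Rep x p -> svalid x -> svalid (projT2 (projT2 p)).
Proof.
  pose proof (good_interp _ _ HBI t) as G.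
  destruct 1; simpl; intros V; [apply (g_vemb G) | apply (g_vproj G)]; auto.
Qed.

Lemma Rep_sim t (i i' : sidx (interp BI t)) (x : sst i) (x' : sst i') p q :
  Rep x p -> Rep x' q -> svalid x -> svalid x' -> Simx t x x' ->
  exists j j' (u : sst (S:=interp BI t) j) (u' : sst j'),
    p = pack u /\ q = pack u' /\ Simx t u u'.
Proof.
  pose proof (good_interp _ _ HBI t) as G.
  destruct (Sim_mono _ _ HBI t) as [ME MP].
  intros R1 R2 V V' HS. destruct R1 as [Hp j H|Hn j H]; destruct R2 as [Hp' j' H'|Hn' j' H'].
  all: do 4 eexists; split; [reflexivity|split; [reflexivity|]].
  - apply ME; auto. apply (g_vemb G); auto.
    apply Sim_sym. apply ME; auto. apply Sim_sym; auto.
  - apply ME; auto. apply (g_vproj G); auto.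
    apply Sim_sym. apply MP; auto. apply Sim_sym; auto.
  - apply MP; auto. apply (g_vemb G); auto.
    apply Sim_sym. apply ME; auto. apply Sim_sym; auto.
  - apply MP; auto. apply (g_vproj G); auto.
    apply Sim_sym. apply MP; auto. apply Sim_sym; auto.
Qed.



Lemma var_ml C C' (a : hlist (@estate B BI) C) (a' : hlist (@estate B BI) C') :
  CSim a a' -> forall k t j j' (dd : stj C (Var B k) t j) (dd' : stj C' (Var B k) t j'),
  svalid (sval dd a) /\ svalid (sval dd' a') /\ Simx t (sval dd a) (sval dd' a').
Proof.
  intros HC k t j j' dd dd'.
  destruct (VarCore _ _ _ _ HC k (var_lt _ _ _ _ dd)) as [tt [i [i' [x [x' [E [E' [J [J' [V [V' HS]]]]]]]]]]].
  pose proof (var_rep _ _ _ _ dd a _ _ _ E J) as R. pose proof (var_rep _ _ _ _ dd' a' _ _ _ E' J') as R'.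
  pose proof (Rep_valid _ _ _ _ R V) as W. pose proof (Rep_valid _ _ _ _ R' V') as W'.
  destruct (Rep_sim _ _ _ _ _ _ _ R R' V V' HS) as [k1 [k2 [u [u' [P1 [P2 HU]]]]]].
  unfold pack in P1, P2.
  pose proof (f_equal (@projT1 _ _) P1) as T. simpl in T. subst tt.
  apply Eqdep.EqdepTheory.inj_pair2 in P1. apply Eqdep.EqdepTheory.inj_pair2 in P2.
  pose proof (f_equal (@projT1 _ _) P1) as T1. simpl in T1. subst k1.
  pose proof (f_equal (@projT1 _ _) P2) as T2. simpl in T2. subst k2.
  apply Eqdep.EqdepTheory.inj_pair2 in P1. apply Eqdep.EqdepTheory.inj_pair2 in P2.
  simpl in W, W'. subst. auto.
Qed.

End S.

Section S.
Variable B : Type.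
Variable BI : B -> BaseSys.
Hypothesis HBI : forall b : B, is_direct_factor_system (baseRaw (BI b)).
Notation Simx t x y := (Sim B BI t _ _ x y).
Arguments CSim {B BI C C'} _ _.

Lemma nth_proj (L : list (entry BI)) k :
  projT1 (nth k L (dentry BI)) = nth k (map (@projT1 _ _) L) (TProp B).
Proof. revert k; induction L; destruct k; simpl; auto. Qed.

Lemma ty_uniq (C : list (entry BI)) r t j (d : stj C r t j) :
  forall (C' : list (entry BI)) t' j' (d' : stj C' r t' j'), map (@projT1 _ _) C = map (@projT1 _ _) C' -> t = t'.
Proof.
  induction d; intros C' t' j' d' HM; dependent destruction d'.
  1,2,3,4: rewrite !nth_proj, HM; reflexivity.
  - pose proof (IHd1 _ _ _ d'1 HM) as E. congruence.
  - f_equal. apply (IHd _ _ _ d'). rewrite !map_app. f_equal; exact HM.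
Qed.

Lemma SimSame (C : list (entry BI)) r t j (d : stj C r t j) :
  forall (a a' : hlist (@estate B BI) C), CSim a a' ->
  svalid (sval d a) /\ svalid (sval d a') /\ Simx t (sval d a) (sval d a').
Proof.
  induction d; intros a a' HC.
  - apply (var_ml _ _ HBI _ _ _ _ HC).
  - apply (var_ml _ _ HBI _ _ _ _ HC).
  - destruct (IHd1 a a' HC) as [V1 [V1' S1]]. destruct (IHd2 a a' HC) as [V2 [V2' S2]].
    simpl. destruct V1 as [V1 _], V1' as [V1' _]. split; [|split]; auto.
    all: try (apply S1; auto).
  - pose proof (good_interp _ _ HBI rho) as G1. pose proof (good_interp _ _ HBI sigma) as G2.
    assert (HV : forall (h : hlist (@estate B BI) C), CSim h h ->
              svalid (sval (@stj_lam B BI C n rho sigma r i j e d) h)).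
    { intros h Hh. simpl. split.
      - intros u Vu. apply (IHd (hsnoc h (e:=existT _ rho i) u) (hsnoc h (e:=existT _ rho i) u)).
        apply CSim_snoc; auto. apply Sim_refl; auto.
      - intros u v Vu Vv A. apply (rel_approx G2).
        + apply (IHd (hsnoc h (e:=existT _ rho i) u) (hsnoc h (e:=existT _ rho i) u)).
          apply CSim_snoc; auto. apply Sim_refl; auto.
        + destruct (IHd (hsnoc h (e:=existT _ rho i) u) (hsnoc h (e:=existT _ rho i) v)) as [W1 [W2 HS]].
          { apply CSim_snoc; auto. apply Sim_ord; auto. apply (g_refl G1). apply (g_pre G1); auto. }
          apply Sim_ord; auto. apply (g_refl G2). }
    split; [apply HV; auto; eapply CSim_refl_l; eauto|].
    split; [apply HV; auto; eapply CSim_refl_r; eauto|].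
    simpl. intros u v Vu Vv HS. apply IHd. apply CSim_snoc; auto.
Qed.

Lemma ML (C : list (entry BI)) r t j (d : stj C r t j) :
  forall (C' : list (entry BI)) j' (d' : stj C' r t j') (a : hlist (@estate B BI) C) (a' : hlist (@estate B BI) C'),
  CSim a a' -> Simx t (sval d a) (sval d' a').
Proof.
  induction d; intros C' j' d' a a' HC.
  - apply (var_ml _ _ HBI _ _ _ _ HC).
  - apply (var_ml _ _ HBI _ _ _ _ HC).
  - dependent destruction d'.
    assert (rho = rho0) by (eapply ty_uniq; eauto; eapply CSim_map; eauto). subst rho0.
    simpl. apply (IHd1 _ _ d'1 a a' HC).
    + apply (SimSame _ _ _ _ d2 a a); eapply CSim_refl_l; eauto.
    + apply (SimSame _ _ _ _ d'2 a' a'); eapply CSim_refl_r; eauto.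
    + apply IHd2; auto.
  - dependent destruction d'. simpl.
    intros u v Vu Vv HS. apply IHd. apply CSim_snoc; auto.
Qed.
End S.

Theorem corollary3p10
  (B : Type) (BI : B -> BaseSys)
  (HBI : forall b : B, is_direct_factor_system (baseRaw (BI b)))
  (Gamma : list (ty B)) (r : term B) (rho : ty B)
  (Hpm : forall t, In t Gamma -> posT t = true \/ negT t = true)
  (Hty : typed Gamma r rho)
  (C : list (entry BI)) (HC : map (@projT1 _ _) C = Gamma)
  (i i' : sidx (interp BI rho)) (Hii' : sle i i')
  (d : stj C r rho i) (d' : stj C r rho i')
  (a : hlist (@estate B BI) C) (Ha : hvalid a) :
  srel (sval d' a) (sval d a).
Proof.
  pose proof (hvalid_CSim _ _ HBI _ a Ha) as H.
  pose proof (ML _ _ HBI _ _ _ _ d' _ _ d a a H) as HS.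
  apply Sim_ord; auto.
  - apply (SimSame _ _ HBI _ _ _ _ d' a a H).
  - apply (SimSame _ _ HBI _ _ _ _ d a a H).
Qed.
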